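(* Let $\mathcal{H},\mathcal{K}$ be real or complex Hilbert spaces and let $S:\mathcal{H}\to\mathcal{K}$ and $T:\mathcal{K}\to\mathcal{H}$ be (not necessarily densely defined or closed) linear operators. Let $M_{S,T}$ be the operator on $\mathcal{H}\times\mathcal{K}$ with domain $\operatorname{dom} S\times\operatorname{dom} T$ defined by $M_{S,T}(h,k)=(-Tk,Sh)$. The following assertions are equivalent: (i) $S$ and $T$ are densely defined and $S^*=T$ and $T^*=S$; (ii) every non-zero real number $t$ belongs to the resolvent set of $M_{S,T}$ and $$\|R_{S,T}(t)\|\le \frac{1}{|t|}\qquad\text{for all } t\in\mathbb{R},\ t\neq 0.$$
   Context: A scalar $\lambda$ belongs to the resolvent set of $M_{S,T}$ if $M_{S,T}-\lambda I$ (defined on $\operatorname{dom} S\times\operatorname{dom} T$) is injective and has an everywhere defined bounded inverse on $\mathcal{H}\times\mathcal{K}$; then $R_{S,T}(\lambda):=(M_{S,T}-\lambda I)^{-1}$. $\mathcal{H}\times\mathcal{K}$ carries the product Hilbert space norm. *)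

(* Defs.v *)
(* Hilbert spaces are complete normed
   spaces whose norm comes from an inner product (given explicitly). *)
From mathcomp Require Import all_boot all_algebra.
From mathcomp Require Import all_classical all_reals all_analysis.
From mathcomp Require Import complex.
Set Implicit Arguments. Unset Strict Implicit. Unset Printing Implicit Defensive.
Import GRing.Theory Num.Theory.
Local Open Scope classical_set_scope.
Local Open Scope ring_scope.

Section Defs.
Variable (K : numFieldType).

(* [ip] is an inner product on V inducing the norm of V, w.r.t. the
   conjugation [cj] of the scalar field (identity for R, complex conjugation
   for C).  Linear in the first argument, conjugate-symmetric, and
   |v|^2 = <v,v> (which gives positive definiteness). *)
Definition is_inner_product (cj : K -> K) (V : normedModType K)
    (ip : V -> V -> K) : Prop :=
  [/\ (forall (a : K) (x y z : V), ip (a *: x + y) z = a * ip x z + ip y z),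
      (forall x y : V, ip y x = cj (ip x y)) &
      (forall v : V, `|v| ^+ 2 = ip v v)].

(* D is a linear subspace and A is linear on D: a linear operator with
   domain D (values of A outside D are irrelevant). *)
Definition linear_subspace (V : lmodType K) (D : set V) : Prop :=
  D 0 /\ forall (a : K) (x y : V), D x -> D y -> D (a *: x + y).

Definition linear_op (V W : lmodType K) (D : set V) (A : V -> W) : Prop :=
  linear_subspace D /\
  forall (a : K) (x y : V), D x -> D y -> A (a *: x + y) = a *: A x + A y.

Definition densely_defined (V : normedModType K) (D : set V) : Prop :=
  closure D = setT.

Definition is_adjoint (V W : normedModType K) (ipV : V -> V -> K)
    (ipW : W -> W -> K) (DA : set V) (A : V -> W) (DB : set W) (B : W -> V)
    : Prop :=
  (forall k : W, DB k <-> exists z : V, forall h, DA h -> ipW (A h) k = ipV h z)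
  /\ (forall k : W, DB k -> forall h, DA h -> ipW (A h) k = ipV h (B k)).

Definition MST_sub (H Kk : lmodType K) (S : H -> Kk) (T : Kk -> H) (lam : K)
    (z : H * Kk) : H * Kk :=
  (- T z.2 - lam *: z.1, S z.1 - lam *: z.2).

Definition pnorm2 (H Kk : normedModType K) (z : H * Kk) : K :=
  `|z.1| ^+ 2 + `|z.2| ^+ 2.

Definition is_inverse_MST (H Kk : lmodType K) (DS : set H) (S : H -> Kk)
    (DT : set Kk) (T : Kk -> H) (lam : K) (Rinv : H * Kk -> H * Kk) : Prop :=
  (forall z, DS (Rinv z).1 /\ DT (Rinv z).2 /\ MST_sub S T lam (Rinv z) = z)
  /\ (forall w : H * Kk, DS w.1 -> DT w.2 -> Rinv (MST_sub S T lam w) = w).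

(* operator norm bound  ||A|| <= c  (for c >= 0) w.r.t. the product Hilbert
   norm, written with squares to avoid square roots *)
Definition opnorm_le (H Kk : normedModType K) (A : H * Kk -> H * Kk) (c : K)
    : Prop :=
  forall z, pnorm2 (A z) <= c ^+ 2 * pnorm2 z.

Definition in_resolvent (H Kk : normedModType K) (DS : set H) (S : H -> Kk)
    (DT : set Kk) (T : Kk -> H) (lam : K) : Prop :=
  exists Rinv, is_inverse_MST DS S DT T lam Rinv /\
    exists c : K, 0 <= c /\ opnorm_le Rinv c.

Definition thm_statement (cj : K -> K) (H Kk : completeNormedModType K)
    (ipH : H -> H -> K) (ipK : Kk -> Kk -> K)
    (DS : set H) (S : H -> Kk) (DT : set Kk) (T : Kk -> H) : Prop :=
  (densely_defined DS /\ densely_defined DT /\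
   is_adjoint ipH ipK DS S DT T /\ is_adjoint ipK ipH DT T DS S)
  <->
  (forall t : K, t \is Num.real -> t != 0 ->
     in_resolvent DS S DT T t /\
     forall Rinv, is_inverse_MST DS S DT T t Rinv -> opnorm_le Rinv (`|t|^-1)).

End Defs.

(* Main.v *)
Require Import Defs.
From mathcomp Require Import all_boot all_order all_algebra.
From mathcomp Require Import all_classical all_reals all_analysis.
From mathcomp Require Import complex.
From mathcomp Require Import ring lra.
Import Order.TTheory GRing.Theory Num.Theory.
Set Implicit Arguments. Unset Strict Implicit. Unset Printing Implicit Defensive.
Local Open Scope classical_set_scope.
Local Open Scope ring_scope.


Lemma natSinv_small (R : realType) (d : R) : 0 < d ->
  exists N : nat, forall n, (N <= n)%N -> (n.+1%:R)^-1 < d.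
Proof.
move=> d0; exists (Num.truncn (d^-1)) => n Nn.
have h1 := truncnS_gt (d^-1).
have h2 : (Num.truncn d^-1).+1%:R <= n.+1%:R :> R by rewrite ler_nat ltnS.
have h3 : d^-1 < n.+1%:R by exact: lt_le_trans h1 h2.
rewrite -[d]invrK ltf_pV2 ?posrE ?invr_gt0 //; exact: ltr0Sn.
Qed.

Arguments natSinv_small {R d}.

Lemma aux_par (R : realFieldType) (e im i_n A a b M C Nn d : R) :
  d <= A - 2^-1 * (a + b) - (2^-1 * (a + b) - 2^-1 * (2^-1 * (M + C + (C + Nn)))) ->
  A - a - (a - M) < d + im -> A - b - (b - Nn) < d + i_n -> im < e / 4 -> i_n < e / 4 ->
  M - C + (- C - - Nn) < e.
Proof. move=> *. lra. Qed.
Arguments aux_par {R e im i_n A a b M C Nn d}.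

Section Proj.
Variables (R : realType) (X : zmodType) (sc : R -> X -> X) (P : X -> X -> R).
Hypotheses (PD : forall x y z, P (x + y) z = P x z + P y z)
 (PZ : forall a x z, P (sc a x) z = a * P x z)
 (PC : forall x y, P x y = P y x)
 (Pge0 : forall x, 0 <= P x x).

Lemma P0l z : P 0 z = 0.
Proof. have h := PD 0 0 z; rewrite addr0 in h; by apply/(addrI (P 0 z)); rewrite addr0 -h. Qed.
Lemma PNl x z : P (- x) z = - P x z.
Proof. by apply/eqP; rewrite -subr_eq0 opprK -PD addNr P0l. Qed.
Lemma PBl x y z : P (x - y) z = P x z - P y z.
Proof. by rewrite PD PNl. Qed.
Lemma PDr x y z : P z (x + y) = P z x + P z y.
Proof. by rewrite PC PD !(PC _ z). Qed.
Lemma PZr a x z : P z (sc a x) = a * P z x.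
Proof. by rewrite PC PZ PC. Qed.
Lemma PNr x z : P z (- x) = - P z x.
Proof. by rewrite PC PNl PC. Qed.
Lemma PBr x y z : P z (x - y) = P z x - P z y.
Proof. by rewrite PDr PNr. Qed.

Lemma ineq_mu a b mu : 0 < mu -> 2 * P a b <= mu * P a a + P b b / mu.
Proof.
move=> mu0; have h := Pge0 (sc mu a - b).
rewrite !(PBl, PBr, PZr, PZ) (PC b a) in h.
have hm : mu != 0 by rewrite gt_eqF.
rewrite -(ler_pM2l mu0).
have -> : mu * (mu * P a a + P b b / mu) = mu * mu * P a a + P b b by field.
lra.
Qed.

Definition conv (u : nat -> X) (b : X) :=
  forall e : R, 0 < e -> exists N, forall n, (N <= n)%N -> P (u n - b) (u n - b) < e.

Lemma P_cont a u b : conv u b -> forall e : R, 0 < e ->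
  exists N, forall n, (N <= n)%N -> `|P (u n) a - P b a| < e.
Proof.
move=> cu e e0.
set mu := 2 * (P a a + 1) / e.
have qa := Pge0 a.
have mu0 : 0 < mu by rewrite /mu divr_gt0 // mulr_gt0 //; lra.
have [N HN] := cu (e / (2 * mu)) (divr_gt0 e0 (ltac:(lra) : 0 < 2 * mu)).
exists N => n /HN hn.
have h1 := ineq_mu (u n - b) a mu0.
have h2 := ineq_mu (- (u n - b)) a mu0.
rewrite !(PNl, PNr, opprK) in h2.
have h3 : mu * P (u n - b) (u n - b) < e / 2.
  have -> : e / 2 = mu * (e / (2 * mu)) by field; rewrite gt_eqF.
  by rewrite ltr_pM2l.
have h4 : P a a / mu < e / 2.
  rewrite /mu.
  have -> : P a a / (2 * (P a a + 1) / e) = (P a a / (P a a + 1)) * (e / 2).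
    by field; rewrite !gt_eqF //; lra.
  rewrite -[X in _ < X]mul1r ltr_pM2r ?divr_gt0 // ltr_pdivrMr; lra.
rewrite PBl in h1 h2 *.
rewrite ltr_norml; apply/andP; split; lra.
Qed.

Variable V : set X.
Hypotheses (V0 : V 0) (VD : forall x y, V x -> V y -> V (x + y))
  (VZ : forall a x, V x -> V (sc a x))
  (Vcomplete : forall u, (forall n, V (u n)) ->
     (forall e : R, 0 < e -> exists N, forall m n, (N <= m)%N -> (N <= n)%N ->
         P (u m - u n) (u m - u n) < e) ->
     exists v, V v /\ conv u v).

Theorem projection x : exists v, V v /\ forall w, V w -> P (x - v) w = 0.
Proof.
pose A := [set r | exists v, V v /\ r = P (x - v) (x - v)].
have A0 : A (P (x - 0) (x - 0)) by exists 0.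
have lbA : has_lbound A by exists 0 => r [v [_ ->]].
have hinf : has_inf A by split => //; exists (P (x - 0) (x - 0)).
set d := inf A.
have dle : forall v, V v -> d <= P (x - v) (x - v).
  by move=> v Vv; apply: ge_inf => //; exists v.
have : forall n : nat, exists v, V v /\ P (x - v) (x - v) < d + (n.+1%:R)^-1.
  move=> n; have hpos : 0 < (n.+1%:R : R)^-1 by rewrite invr_gt0.
  have [r [v [Vv ->]] hr] := inf_adherent hpos hinf.
  by exists v.
move=> /choice [vs Hvs].
clearbody d.
have cauchy : forall e : R, 0 < e -> exists N, forall m n, (N <= m)%N -> (N <= n)%N ->
         P (vs m - vs n) (vs m - vs n) < e.
  move=> e e0; have [N HN] := natSinv_small (ltac:(lra) : 0 < e / 4).
  exists N => m n /HN hm /HN hn.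
  have [Vm qm] := Hvs m; have [Vn qn] := Hvs n.
  have hmid := dle _ (VZ (2^-1) (VD Vm Vn)).
  rewrite !(PBl, PBr, PZ, PZr, PD, PDr, PNl, PNr) in hmid qm qn *.
  rewrite ?(PC (vs m) x, PC (vs n) x, PC (vs n) (vs m)) in hmid qm qn *.
  exact: (aux_par hmid qm qn hm hn).
have [v [Vv cv]] := Vcomplete (fun n => (Hvs n).1) cauchy.
exists v; split => // w Vw.
set c := P (x - v) w; set W := P w w.
have ce : c = P (x - v) w by []. have We : W = P w w by []. clearbody c W.
have key : forall s dl, 0 < dl -> 2 * s * c <= s ^+ 2 * W + dl.
  move=> s dl dl0.
  set mu := 4 * (s ^+ 2 * W + 1) / dl.
  have W0 : 0 <= W by rewrite We; apply: Pge0.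
  have sW0 : 0 <= s ^+ 2 * W by rewrite mulr_ge0 // sqr_ge0.
  have mu0 : 0 < mu by rewrite /mu divr_gt0 // mulr_gt0 //; lra.
  have [N1 HN1] := natSinv_small (ltac:(lra) : 0 < dl / 4).
  have [N2 HN2] := cv (dl / (4 * mu)) (divr_gt0 dl0 (ltac:(lra) : 0 < 4 * mu)).
  pose n := maxn N1 N2.
  have h1 := HN1 n (leq_maxl _ _).
  have h2 := HN2 n (leq_maxr _ _).
  have [Vn qn] := Hvs n.
  have h3 := dle _ (VD Vn (VZ s Vw)).
  have h4 := ineq_mu (vs n - v) (sc s w) mu0.
  have e1 : P (x - (vs n + sc s w)) (x - (vs n + sc s w)) =
     P (x - vs n) (x - vs n) - 2 * s * P (x - vs n) w + s ^+ 2 * W.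
    rewrite We !(PBl, PBr, PZr, PZ, PD, PDr) !(PC (vs n) x, PC w x, PC w (vs n)).
    ring.
  have e2 : P (sc s w) (sc s w) = s ^+ 2 * W by rewrite PZ PZr We; ring.
  have e3 : 2 * P (vs n - v) (sc s w) = 2 * s * (P (vs n) w - P v w).
    by rewrite PZr PBl; ring.
  have e4 : c = P (x - vs n) w + (P (vs n) w - P v w) by rewrite ce !PBl; ring.
  have h5 : mu * P (vs n - v) (vs n - v) < dl / 4.
    have -> : dl / 4 = mu * (dl / (4 * mu)) by field; rewrite gt_eqF.
    by rewrite ltr_pM2l.
  have h6 : s ^+ 2 * W / mu < dl / 4.
    rewrite /mu.
    have -> : s ^+ 2 * W / (4 * (s ^+ 2 * W + 1) / dl) =
       (s ^+ 2 * W / (s ^+ 2 * W + 1)) * (dl / 4).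
      by field; rewrite !gt_eqF //; lra.
    rewrite -[X in _ < X]mul1r ltr_pM2r ?divr_gt0 // ltr_pdivrMr; lra.
  rewrite e2 e3 in h4.
  rewrite e1 in h3.
  rewrite e4.
  set i := (n.+1%:R^-1 : R) in h1 qn *. clearbody mu n i.
  have : 2 * s * P (x - vs n) w < i + s ^+ 2 * W by lra.
  lra.
pose s := c / (W + 1).
have W0 : 0 <= W by rewrite We; apply: Pge0.
have hs : c = s * (W + 1) by rewrite /s; field; rewrite gt_eqF //; lra.
have k2 : 2 * s * c <= s ^+ 2 * W.
  rewrite leNgt; apply/negP => hlt.
  have := key s ((2 * s * c - s ^+ 2 * W) / 2) ltac:(lra).
  lra.
rewrite hs in k2.
have : s ^+ 2 * (W + 2) <= 0 by nra.
move=> hh.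
have s0 : s = 0.
  apply/eqP; rewrite -sqrf_eq0 eq_le sqr_ge0 andbT.
  by rewrite -(pmulr_lle0 _ (_ : 0 < W + 2)) //; lra.
by rewrite hs s0 mul0r.
Qed.

End Proj.


Lemma seq_complete (K : numFieldType) (V : completeNormedModType K) (u : nat -> V) :
  (forall e : K, 0 < e -> exists N, forall m n, (N <= m)%N -> (N <= n)%N -> `|u m - u n| < e) ->
  exists x, forall e : K, 0 < e -> exists N, forall n, (N <= n)%N -> `|u n - x| < e.
Proof.
move=> H.
have cu : cauchy (u @ \oo).
  apply: cauchy_exP => e e0. have [N HN] := H e e0. exists (u N).
  exists N => // n /= Nn. rewrite -ball_normE /=. exact: HN.
have [x hx] := iffLR (cvg_ex _) (cauchy_cvg _ cu).
exists x => e e0.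
move/cvgrPdist_lt: hx => /(_ e e0) [N _ HN].
exists N => n Nn; rewrite distrC; exact: HN.
Qed.

Section Gen.
Variables (R : realType) (K : numFieldType) (cj : K -> K) (emb : R -> K) (re : K -> R).
Hypotheses (embD : forall a b, emb (a + b) = emb a + emb b)
  (embM : forall a b, emb (a * b) = emb a * emb b)
  (emb0 : emb 0 = 0) (emb1 : emb 1 = 1) (embN : forall a, emb (- a) = - emb a)
  (emb_le : forall a b, (emb a <= emb b) = (a <= b))
  (emb_lt : forall a b, (emb a < emb b) = (a < b))
  (emb_re : forall x, x \is Num.real -> emb (re x) = x)
  (re_emb : forall a, re (emb a) = a)
  (reD : forall x y, re (x + y) = re x + re y)
  (reM : forall a x, re (emb a * x) = a * re x)
  (cjD : forall x y, cj (x + y) = cj x + cj y)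
  (cjM : forall x y, cj (x * y) = cj x * cj y)
  (cjK : forall x, cj (cj x) = x)
  (cj_emb : forall a, cj (emb a) = emb a)
  (re_cj : forall x, re (cj x) = re x)
  (addcj : forall x, x + cj x = emb (2 * re x))
  (polar : forall f, (forall a, re (a * f) = 0) -> f = 0).

Lemma cj0 : cj 0 = 0.
Proof. have h := cjD 0 0; rewrite addr0 in h; by apply/(addrI (cj 0)); rewrite addr0 -h. Qed.
Lemma cjN x : cj (- x) = - cj x.
Proof. by apply/eqP; rewrite -subr_eq0 opprK -cjD addNr cj0. Qed.
Lemma re0 : re 0 = 0.
Proof. by rewrite -emb0 re_emb. Qed.
Lemma reN x : re (- x) = - re x.
Proof. by apply/eqP; rewrite -subr_eq0 opprK -reD addNr re0. Qed.
Lemma reB x y : re (x - y) = re x - re y.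
Proof. by rewrite reD reN. Qed.
Lemma embB a b : emb (a - b) = emb a - emb b.
Proof. by rewrite embD embN. Qed.
Lemma embX a n : emb (a ^+ n) = emb a ^+ n.
Proof. by elim: n => [|n IH]; rewrite ?expr0 ?emb1 // !exprS embM IH. Qed.
Lemma emb_inj a b : emb a = emb b -> a = b.
Proof. by move=> h; rewrite -(re_emb a) h re_emb. Qed.
Lemma real_emb x : x \is Num.real -> exists a, x = emb a.
Proof. by move=> /emb_re h; exists (re x). Qed.
Lemma cj_real x : x \is Num.real -> cj x = x.
Proof. by move=> /emb_re <-; rewrite cj_emb. Qed.

Section IPS.
Variables (V : normedModType K) (ip : V -> V -> K).
Hypothesis Hip : is_inner_product cj ip.

Lemma ip0l z : ip 0 z = 0.
Proof.
have [Hl _ _] := Hip; have h := Hl 1 0 0 z.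
rewrite scaler0 addr0 mul1r in h.
by apply/(addrI (ip 0 z)); rewrite addr0 -h.
Qed.
Lemma ipDl x y z : ip (x + y) z = ip x z + ip y z.
Proof. by have [Hl _ _] := Hip; have := Hl 1 x y z; rewrite scale1r mul1r. Qed.
Lemma ipZl a x z : ip (a *: x) z = a * ip x z.
Proof. by have [Hl _ _] := Hip; have := Hl a x 0 z; rewrite addr0 ip0l addr0. Qed.
Lemma ipNl x z : ip (- x) z = - ip x z.
Proof. by rewrite -scaleN1r ipZl mulN1r. Qed.
Lemma ipBl x y z : ip (x - y) z = ip x z - ip y z.
Proof. by rewrite ipDl ipNl. Qed.
Lemma ipC x y : ip y x = cj (ip x y).
Proof. by have [_ Hs _] := Hip; apply: Hs. Qed.
Lemma ipDr x y z : ip z (x + y) = ip z x + ip z y.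
Proof. by rewrite ipC ipDl cjD -!ipC. Qed.
Lemma ipZr a x z : ip z (a *: x) = cj a * ip z x.
Proof. by rewrite ipC ipZl cjM -ipC. Qed.
Lemma ip0r z : ip z 0 = 0.
Proof. by rewrite ipC ip0l cj0. Qed.
Lemma ipNr x z : ip z (- x) = - ip z x.
Proof. by rewrite ipC ipNl cjN -ipC. Qed.
Lemma ipBr x y z : ip z (x - y) = ip z x - ip z y.
Proof. by rewrite ipDr ipNr. Qed.
Lemma ipvv v : ip v v = `|v| ^+ 2.
Proof. by have [_ _ Hn] := Hip; rewrite Hn. Qed.

Definition nv (v : V) := re `|v|.
Lemma embnv v : emb (nv v) = `|v|.
Proof. by rewrite /nv emb_re // normr_real. Qed.
Lemma nv_ge0 v : 0 <= nv v.
Proof. by rewrite -emb_le emb0 embnv. Qed.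

Definition Pr (x y : V) := re (ip x y).
Definition scr (a : R) (x : V) := emb a *: x.
Lemma PrD x y z : Pr (x + y) z = Pr x z + Pr y z.
Proof. by rewrite /Pr ipDl reD. Qed.
Lemma PrZ a x z : Pr (scr a x) z = a * Pr x z.
Proof. by rewrite /Pr /scr ipZl reM. Qed.
Lemma PrC x y : Pr x y = Pr y x.
Proof. by rewrite /Pr ipC re_cj. Qed.
Lemma Prvv v : Pr v v = nv v ^+ 2.
Proof. by rewrite /Pr ipvv -embnv -embX re_emb. Qed.
Lemma Pr_ge0 v : 0 <= Pr v v.
Proof. by rewrite Prvv sqr_ge0. Qed.
Lemma Pr_eq0 v : Pr v v = 0 -> v = 0.
Proof.
rewrite Prvv => /eqP; rewrite sqrf_eq0 => /eqP h.
by apply/eqP; rewrite -normr_eq0 -embnv h emb0.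
Qed.
Lemma ipvv_emb v : ip v v = emb (Pr v v).
Proof. by rewrite Prvv embX embnv ipvv. Qed.
Lemma PrDr x y z : Pr z (x + y) = Pr z x + Pr z y.
Proof. by rewrite /Pr ipDr reD. Qed.
Lemma PrNl x z : Pr (- x) z = - Pr x z.
Proof. by rewrite /Pr ipNl reN. Qed.
Lemma PrNr x z : Pr z (- x) = - Pr z x.
Proof. by rewrite /Pr ipNr reN. Qed.
Lemma PrBl x y z : Pr (x - y) z = Pr x z - Pr y z.
Proof. by rewrite /Pr ipBl reB. Qed.
Lemma PrBr x y z : Pr z (x - y) = Pr z x - Pr z y.
Proof. by rewrite /Pr ipBr reB. Qed.
Lemma PrZl a x z : Pr (emb a *: x) z = a * Pr x z.
Proof. by rewrite /Pr ipZl reM. Qed.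
Lemma PrZr a x z : Pr z (emb a *: x) = a * Pr z x.
Proof. by rewrite /Pr ipZr cj_emb reM. Qed.
Lemma Pr0l z : Pr 0 z = 0.
Proof. by rewrite /Pr ip0l re0. Qed.
Lemma Pr0r z : Pr z 0 = 0.
Proof. by rewrite /Pr ip0r re0. Qed.

Lemma Pr_lt_norm v (eps : K) : 0 < eps -> Pr v v < re eps ^+ 2 -> `|v| < eps.
Proof.
move=> e0 h.
have e0r : 0 < re eps by rewrite -emb_lt emb0 emb_re // gtr0_real.
rewrite Prvv in h.
rewrite -(emb_re (gtr0_real e0)) -embnv emb_lt.
have := nv_ge0 v; nra.
Qed.

Lemma norm_lt_Pr v (e : R) : 0 < e -> `|v| < emb (Num.sqrt e) -> Pr v v < e.
Proof.
move=> e0; rewrite -embnv emb_lt Prvv => h.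
have := sqr_sqrtr (ltW e0); have := nv_ge0 v; nra.
Qed.

Lemma closure_approx (D : set V) x : closure D x ->
  forall e : R, 0 < e -> exists h, D h /\ Pr (x - h) (x - h) < e.
Proof.
move=> cl e e0.
have eps0 : 0 < emb (Num.sqrt e) by rewrite -emb0 emb_lt sqrtr_gt0.
have [h [Dh bh]] := cl _ (nbhsx_ballx x _ eps0).
exists h; split => //; apply: norm_lt_Pr => //.
by move: bh; rewrite -ball_normE.
Qed.

Lemma approx_closure (D : set V) x :
  (forall e : R, 0 < e -> exists h, D h /\ Pr (x - h) (x - h) < e) -> closure D x.
Proof.
move=> H B /nbhs_ballP [eps eps0 sB].
have e0r : 0 < re eps by rewrite -emb_lt emb0 emb_re // gtr0_real.
have [h [Dh hh]] := H _ (exprn_gt0 2 e0r).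
exists h; split => //; apply: sB; rewrite -ball_normE /=.
exact: Pr_lt_norm.
Qed.

Lemma q_add a b : Pr (a + b) (a + b) <= 2 * Pr a a + 2 * Pr b b.
Proof.
have := Pr_ge0 (a - b).
rewrite !(PrD, PrDr, PrNl, PrNr) (PrC b a); lra.
Qed.
Lemma q_scale c a : Pr (emb c *: a) (emb c *: a) = c ^+ 2 * Pr a a.
Proof. by rewrite PrZl PrZr mulrA expr2. Qed.
Lemma q_opp a : Pr (- a) (- a) = Pr a a.
Proof. by rewrite PrNl PrNr opprK. Qed.

Lemma conv_ext (u u' : nat -> V) b : (forall n, u n = u' n) -> conv Pr u' b -> conv Pr u b.
Proof. by move=> e cu ep ep0; have [N HN] := cu ep ep0; exists N => n /HN; rewrite e. Qed.

Lemma conv_lin c1 c2 (a b : nat -> V) A B : conv Pr a A -> conv Pr b B ->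
  conv Pr (fun n => emb c1 *: a n + emb c2 *: b n) (emb c1 *: A + emb c2 *: B).
Proof.
move=> ca cb e e0.
have k1 : 0 < e / (4 * (c1 ^+ 2 + 1)).
  by apply: divr_gt0 => //; apply: mulr_gt0 => //; have := sqr_ge0 c1; lra.
have k2 : 0 < e / (4 * (c2 ^+ 2 + 1)).
  by apply: divr_gt0 => //; apply: mulr_gt0 => //; have := sqr_ge0 c2; lra.
have [N1 H1] := ca _ k1; have [N2 H2] := cb _ k2.
exists (maxn N1 N2) => n Nn.
have h1 := H1 n (leq_trans (leq_maxl _ _) Nn).
have h2 := H2 n (leq_trans (leq_maxr _ _) Nn).
have -> : emb c1 *: a n + emb c2 *: b n - (emb c1 *: A + emb c2 *: B) =
   emb c1 *: (a n - A) + emb c2 *: (b n - B).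
  by rewrite !scalerBr opprD addrACA.
apply: le_lt_trans (q_add _ _) _.
rewrite !q_scale.
have g1 : c1 ^+ 2 * Pr (a n - A) (a n - A) <= c1 ^+ 2 * (e / (4 * (c1 ^+ 2 + 1))).
  by apply: ler_wpM2l; [exact: sqr_ge0 | exact: ltW].
have g2 : c2 ^+ 2 * Pr (b n - B) (b n - B) <= c2 ^+ 2 * (e / (4 * (c2 ^+ 2 + 1))).
  by apply: ler_wpM2l; [exact: sqr_ge0 | exact: ltW].
have f1 : c1 ^+ 2 * (e / (4 * (c1 ^+ 2 + 1))) < e / 4.
  have -> : c1 ^+ 2 * (e / (4 * (c1 ^+ 2 + 1))) = (c1 ^+ 2 / (c1 ^+ 2 + 1)) * (e / 4).
    by field; apply/eqP => hh; have := sqr_ge0 c1; lra.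
  rewrite -[X in _ < X]mul1r ltr_pM2r ?divr_gt0 // ltr_pdivrMr; have := sqr_ge0 c1; lra.
have f2 : c2 ^+ 2 * (e / (4 * (c2 ^+ 2 + 1))) < e / 4.
  have -> : c2 ^+ 2 * (e / (4 * (c2 ^+ 2 + 1))) = (c2 ^+ 2 / (c2 ^+ 2 + 1)) * (e / 4).
    by field; apply/eqP => hh; have := sqr_ge0 c2; lra.
  rewrite -[X in _ < X]mul1r ltr_pM2r ?divr_gt0 // ltr_pdivrMr; have := sqr_ge0 c2; lra.
lra.
Qed.

Lemma dense_orth (D : set V) : densely_defined D ->
  forall w, (forall h, D h -> ip h w = 0) -> w = 0.
Proof.
move=> dD w hw; apply: Pr_eq0.
have cl : closure D w by rewrite dD.
have key : forall e : R, 0 < e -> Pr w w < e.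
  move=> e e0; have [h [Dh hh]] := closure_approx cl e0.
  have h1 : Pr h w = 0 by rewrite /Pr hw // re0.
  have h2 : Pr w h = 0 by rewrite PrC.
  rewrite PrBl !PrBr h1 h2 in hh.
  have := Pr_ge0 h; lra.
apply/eqP; rewrite eq_le Pr_ge0 andbT; rewrite leNgt; apply/negP => /key.
by rewrite ltxx.
Qed.

End IPS.

Section IPC.
Variables (V : completeNormedModType K) (ip : V -> V -> K).
Hypothesis Hip : is_inner_product cj ip.

Lemma seq_completeq (u : nat -> V) :
  (forall e : R, 0 < e -> exists N, forall m n, (N <= m)%N -> (N <= n)%N ->
      Pr ip (u m - u n) (u m - u n) < e) ->
  exists x, conv (Pr ip) u x.
Proof.
move=> H.
have [x hx] : exists x, forall e : K, 0 < e -> exists N, forall n, (N <= n)%N -> `|u n - x| < e.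
  apply: seq_complete => e e0.
  have e0r : 0 < re e by rewrite -emb_lt emb0 emb_re // gtr0_real.
  have [N HN] := H (re e ^+ 2) (exprn_gt0 2 e0r).
  exists N => m n Nm Nn; have h := HN m n Nm Nn.
  rewrite (Prvv Hip) in h.
  rewrite -(emb_re (gtr0_real e0)) -embnv emb_lt.
  have := nv_ge0 (u m - u n); nra.
exists x => e e0.
have s0 : 0 < Num.sqrt e by rewrite sqrtr_gt0.
have [N HN] := hx (emb (Num.sqrt e)) (ltac:(by rewrite -emb0 emb_lt)).
exists N => n Nn; have := HN n Nn.
rewrite -embnv emb_lt (Prvv Hip) => h.
have := sqr_sqrtr (ltW e0); have := nv_ge0 (u n - x); nra.
Qed.

Lemma dense_of_orth (D : set V) : linear_subspace D ->
  (forall w, (forall h, D h -> ip h w = 0) -> w = 0) -> densely_defined D.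
Proof.
move=> [D0 Dlin] horth.
have DD : forall x y, D x -> D y -> D (x + y).
  by move=> x y dx dy; have := Dlin 1 x y dx dy; rewrite scale1r.
have DZ : forall a x, D x -> D (a *: x).
  by move=> a x dx; have := Dlin a x 0 dx D0; rewrite addr0.
pose Vq := [set x | forall e : R, 0 < e -> exists h, D h /\ Pr ip (x - h) (x - h) < e].
have sub : forall h, D h -> Vq h.
  by move=> h dh e e0; exists h; split => //; rewrite subrr (Pr0l Hip).
have V0 : Vq 0 by apply: sub.
have VD : forall x y, Vq x -> Vq y -> Vq (x + y).
  move=> x y hx hy e e0.
  have e4 : 0 < e / 4 by lra.
  have [h1 [d1 q1]] := hx _ e4; have [h2 [d2 q2]] := hy _ e4.
  exists (h1 + h2); split; first exact: DD.
  have -> : x + y - (h1 + h2) = (x - h1) + (y - h2) by rewrite opprD addrACA.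
  apply: le_lt_trans (q_add Hip _ _) _; lra.
have VZ : forall a x, Vq x -> Vq (scr a x).
  move=> a x hx e e0.
  have ka : 0 < e / (a ^+ 2 + 1).
    by apply: divr_gt0 => //; have := sqr_ge0 a; lra.
  have [h [dh qh]] := hx _ ka.
  exists (emb a *: h); split; first exact: DZ.
  rewrite /scr -scalerBr (q_scale Hip).
  have g : a ^+ 2 * Pr ip (x - h) (x - h) <= a ^+ 2 * (e / (a ^+ 2 + 1)).
    by apply: ler_wpM2l; [exact: sqr_ge0 | exact: ltW].
  apply: le_lt_trans g _.
  have -> : a ^+ 2 * (e / (a ^+ 2 + 1)) = (a ^+ 2 / (a ^+ 2 + 1)) * e.
    by field; apply/eqP => hh; have := sqr_ge0 a; lra.
  rewrite -[X in _ < X]mul1r ltr_pM2r // ltr_pdivrMr; have := sqr_ge0 a; lra.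
have Vc : forall u, (forall n, Vq (u n)) ->
     (forall e : R, 0 < e -> exists N, forall m n, (N <= m)%N -> (N <= n)%N ->
         Pr ip (u m - u n) (u m - u n) < e) ->
     exists v, Vq v /\ conv (Pr ip) u v.
  move=> u Vu cu; have [x cx] := seq_completeq cu.
  exists x; split => // e e0.
  have e4 : 0 < e / 4 by lra.
  have [N HN] := cx _ e4; have hN := HN N (leqnn N).
  have [h [dh qh]] := Vu N _ e4.
  exists h; split => //.
  have -> : x - h = - (u N - x) + (u N - h) by rewrite opprB addrA subrK.
  apply: le_lt_trans (q_add Hip _ _) _; rewrite (q_opp Hip); lra.
have proj := projection (PrD Hip) (PrZ Hip) (PrC Hip) (Pr_ge0 Hip) V0 VD VZ Vc.
apply/seteqP; split => // x _.
have [v [Vv ov]] := proj x.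
have : x - v = 0.
  apply: horth => h dh; apply: polar => a.
  rewrite -(ipZl Hip) -/(Pr ip _ _) (PrC Hip); apply: ov; apply: sub; exact: DZ.
move/eqP; rewrite subr_eq0 => /eqP ->.
exact: (approx_closure Hip Vv).
Qed.

End IPC.

Lemma emb_neq0 a : a != 0 -> emb a != 0.
Proof. by move=> a0; apply/eqP => h; move/eqP: a0; apply; apply: emb_inj; rewrite h emb0. Qed.
Lemma embV a : a != 0 -> emb (a^-1) = (emb a)^-1.
Proof.
move=> a0; apply: (mulfI (emb_neq0 a0)).
by rewrite -embM mulfV // mulfV ?emb1 // emb_neq0.
Qed.

Lemma emb_real a : emb a \is Num.real.
Proof. by rewrite realE -emb0 !emb_le le_total. Qed.

Section Lin.
Variables (V W : lmodType K) (D : set V) (A : V -> W).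
Hypothesis HA : linear_op D A.
Lemma dom0 : D 0. Proof. by case: HA => [[]]. Qed.
Lemma domD x y : D x -> D y -> D (x + y).
Proof. by case: HA => [[_ h] _] dx dy; have := h 1 x y dx dy; rewrite scale1r. Qed.
Lemma domZ a x : D x -> D (a *: x).
Proof. by case: HA => [[_ h] _] dx; have := h a x 0 dx dom0; rewrite addr0. Qed.
Lemma domN x : D x -> D (- x).
Proof. by move=> dx; rewrite -scaleN1r; apply: domZ. Qed.
Lemma domB x y : D x -> D y -> D (x - y).
Proof. by move=> dx dy; apply: domD => //; apply: domN. Qed.
Lemma lin0 : A 0 = 0.
Proof.
case: HA => [_ h]; have := h 1 0 0 dom0 dom0; rewrite !scale1r addr0 => e.
by apply/(addrI (A 0)); rewrite addr0 -e.
Qed.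
Lemma linD x y : D x -> D y -> A (x + y) = A x + A y.
Proof. by case: HA => [_ h] dx dy; have := h 1 x y dx dy; rewrite !scale1r. Qed.
Lemma linZ a x : D x -> A (a *: x) = a *: A x.
Proof. by case: HA => [_ h] dx; have := h a x 0 dx dom0; rewrite !addr0 lin0 addr0. Qed.
Lemma linN x : D x -> A (- x) = - A x.
Proof. by move=> dx; rewrite -scaleN1r linZ // scaleN1r. Qed.
Lemma linB x y : D x -> D y -> A (x - y) = A x - A y.
Proof. by move=> dx dy; rewrite linD ?linN //; apply: domN. Qed.
End Lin.

Lemma oppB2 (Z : zmodType) (a b c d : Z) : - (a - b) - (c - d) = (- a - c) - (- b - d).
Proof. by rewrite !opprD !opprK addrACA. Qed.
Lemma subB2 (Z : zmodType) (a b c d : Z) : (a - b) - (c - d) = (a - c) - (b - d).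
Proof. by rewrite !opprD !opprK addrACA. Qed.

Lemma lim_unique (x y : nat -> R) (A B : R) :
  (forall e : R, 0 < e -> exists N, forall n, (N <= n)%N -> `|x n - A| < e) ->
  (forall e : R, 0 < e -> exists N, forall n, (N <= n)%N -> `|y n - B| < e) ->
  (forall n, x n = y n) -> A = B.
Proof.
move=> hx hy exy.
have key : forall e : R, 0 < e -> `|A - B| < e.
  move=> e e0.
  have e2 : 0 < e / 2 by lra.
  have [N1 H1] := hx _ e2; have [N2 H2] := hy _ e2.
  have h1 := H1 (maxn N1 N2) (leq_maxl _ _).
  have h2 := H2 (maxn N1 N2) (leq_maxr _ _).
  rewrite exy in h1.
  move: h1 h2; set u := y (maxn N1 N2) => h1 h2.
  have := ler_normD (A - u) (u - B).
  rewrite distrC in h1.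
  have -> : A - u + (u - B) = A - B by rewrite addrA subrK.
  lra.
apply/eqP; rewrite -subr_eq0 -normr_eq0; apply/eqP.
apply/eqP; rewrite eq_le normr_ge0 andbT leNgt; apply/negP => /key.
by rewrite ltxx.
Qed.

Section Closed.
Variables (V W : completeNormedModType K) (ipV : V -> V -> K) (ipW : W -> W -> K)
  (DA : set V) (A : V -> W) (DB : set W) (B : W -> V).
Hypotheses (HipV : is_inner_product cj ipV) (HipW : is_inner_product cj ipW)
  (dA : densely_defined DA) (adj : is_adjoint ipV ipW DA A DB B).

Lemma adj_closed (ws : nat -> W) w y : (forall n, DB (ws n)) ->
  conv (Pr ipW) ws w -> conv (Pr ipV) (fun n => B (ws n)) y -> DB w /\ B w = y.
Proof.
move=> dws cw cy.
have eqw : forall v, DA v -> ipW (A v) w = ipV v y.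
  move=> v dv; apply/eqP; rewrite -subr_eq0; apply/eqP; apply: polar => a.
  rewrite mulrBr reB.
  rewrite -(ipZl HipW) -(ipZl HipV).
  have hc1 := P_cont (PrD HipW) (PrZ HipW) (PrC HipW) (Pr_ge0 HipW) (a *: A v) cw.
  have hc2 := P_cont (PrD HipV) (PrZ HipV) (PrC HipV) (Pr_ge0 HipV) (a *: v) cy.
  have := lim_unique hc1 hc2.
  rewrite /Pr [re (ipW w _)](_ : _ = re (ipW (a *: A v) w)); last by rewrite (ipC HipW) re_cj.
  rewrite [re (ipV y _)](_ : _ = re (ipV (a *: v) y)); last by rewrite (ipC HipV) re_cj.
  move=> -> //; first by rewrite subrr.
  move=> n; rewrite (ipC HipW) re_cj (ipZl HipW) (adj.2 _ (dws n) _ dv).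
  by rewrite -(ipZl HipV) (ipC HipV) re_cj.
have dw : DB w by apply/(adj.1 w); exists y.
split => //; apply/eqP; rewrite -subr_eq0; apply/eqP.
apply: (dense_orth HipV dA) => v dv.
by rewrite (ipBr HipV) -(adj.2 _ dw _ dv) eqw // subrr.
Qed.
End Closed.

Section Main.
Variables (H Kk : completeNormedModType K) (ipH : H -> H -> K) (ipK : Kk -> Kk -> K)
  (DS : set H) (S : H -> Kk) (DT : set Kk) (T : Kk -> H).
Hypotheses (HipH : is_inner_product cj ipH) (HipK : is_inner_product cj ipK)
  (linS : linear_op DS S) (linT : linear_op DT T).

Definition dom (z : H * Kk) := DS z.1 /\ DT z.2.
Definition pr (z : H * Kk) := Pr ipH z.1 z.1 + Pr ipK z.2 z.2.

Lemma pnorm2E z : pnorm2 z = emb (pr z).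
Proof. by rewrite /pnorm2 /pr -(ipvv HipH) -(ipvv HipK) !ipvv_emb // embD. Qed.
Lemma pr_ge0 z : 0 <= pr z.
Proof. by rewrite /pr addr_ge0 // Pr_ge0. Qed.
Lemma pr_eq0 z : pr z = 0 -> z = 0.
Proof.
case: z => h k; rewrite /pr /= => e.
have a0 := Pr_ge0 HipH h; have b0 := Pr_ge0 HipK k.
have ha : Pr ipH h h = 0 by lra.
have hb : Pr ipK k k = 0 by lra.
by rewrite (Pr_eq0 HipH ha) (Pr_eq0 HipK hb).
Qed.

Lemma MST_expand r z : pr (MST_sub S T (emb r) z) =
  (Pr ipH (T z.2) (T z.2) + Pr ipK (S z.1) (S z.1))
  + r * (2 * Pr ipH (T z.2) z.1 - 2 * Pr ipK (S z.1) z.2) + r ^+ 2 * pr z.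
Proof.
case: z => h k; rewrite /pr /MST_sub /=.
rewrite !(PrBl HipH, PrBr HipH, PrNl HipH, PrNr HipH, PrZl HipH, PrZr HipH).
rewrite !(PrBl HipK, PrBr HipK, PrNl HipK, PrNr HipK, PrZl HipK, PrZr HipK).
rewrite [Pr ipH h (T k)](PrC HipH) [Pr ipK k (S h)](PrC HipK).
ring.
Qed.

Lemma MST_B t z1 z2 : dom z1 -> dom z2 ->
  MST_sub S T t (z1 - z2) = MST_sub S T t z1 - MST_sub S T t z2.
Proof.
case: z1 => h1 k1; case: z2 => h2 k2 [/= d1 e1] [/= d2 e2].
rewrite /MST_sub /=.
rewrite (linB linT) // (linB linS) // !scalerBr.
have pe : forall x y : H * Kk, x - y = (x.1 - y.1, x.2 - y.2) by case=> ? ?; case.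
rewrite pe /=; congr pair; [exact: oppB2 | exact: subB2].
Qed.

Lemma MST_Z t a h k : dom (h, k) ->
  MST_sub S T t (a *: h, a *: k) = (a *: (MST_sub S T t (h, k)).1, a *: (MST_sub S T t (h, k)).2).
Proof.
move=> [/= d1 e1]; rewrite /MST_sub /= (linZ linT) // (linZ linS) //.
by rewrite !scalerA mulrC -!scalerA scalerBr scalerN scalerBr.
Qed.

Lemma MST_D t z1 z2 : dom z1 -> dom z2 ->
  MST_sub S T t (z1 + z2) = MST_sub S T t z1 + MST_sub S T t z2.
Proof.
case: z1 => h1 k1; case: z2 => h2 k2 [/= d1 e1] [/= d2 e2].
rewrite /MST_sub /=.
rewrite (linD linT) // (linD linS) // !scalerDr.
have pe : forall x y : H * Kk, x + y = (x.1 + y.1, x.2 + y.2) by case=> ? ?; case.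
rewrite pe /=; congr pair; by rewrite !opprD addrACA.
Qed.

Lemma dom0' : dom 0.
Proof. by split; [exact: (dom0 linS) | exact: (dom0 linT)]. Qed.
Lemma domB' z1 z2 : dom z1 -> dom z2 -> dom (z1 - z2).
Proof. by move=> [? ?] [? ?]; split; [exact: (domB linS) | exact: (domB linT)]. Qed.
Lemma domD' z1 z2 : dom z1 -> dom z2 -> dom (z1 + z2).
Proof. by move=> [? ?] [? ?]; split; [exact: (domD linS) | exact: (domD linT)]. Qed.

Lemma MST0 t : MST_sub S T t 0 = 0.
Proof. by rewrite /MST_sub /= (lin0 linT) (lin0 linS) !scaler0 !subr0 oppr0. Qed.

Definition PP (z w : H * Kk) := Pr ipH z.1 w.1 + Pr ipK z.2 w.2.
Definition scP (a : R) (z : H * Kk) : H * Kk := (emb a *: z.1, emb a *: z.2).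
Lemma PPD x y z : PP (x + y) z = PP x z + PP y z.
Proof. by rewrite /PP (PrD HipH) (PrD HipK) addrACA. Qed.
Lemma PPZ a x z : PP (scP a x) z = a * PP x z.
Proof. by rewrite /PP /scP /= (PrZl HipH) (PrZl HipK) mulrDr. Qed.
Lemma PPC x y : PP x y = PP y x.
Proof. by rewrite /PP (PrC HipH) (PrC HipK). Qed.
Lemma PP_ge0 x : 0 <= PP x x.
Proof. exact: pr_ge0. Qed.

Section Dir1.
Hypotheses (dS : densely_defined DS) (dT : densely_defined DT)
  (adjS : is_adjoint ipH ipK DS S DT T) (adjT : is_adjoint ipK ipH DT T DS S).

Lemma sym h k : DS h -> DT k -> ipK (S h) k = ipH h (T k).
Proof. by move=> dh dk; exact: (adjS.2 k dk h dh). Qed.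

Lemma symPr h k : DS h -> DT k -> Pr ipH (T k) h = Pr ipK (S h) k.
Proof. by move=> dh dk; rewrite (PrC HipH) /Pr sym. Qed.

Lemma LB r z : dom z -> r ^+ 2 * pr z <= pr (MST_sub S T (emb r) z).
Proof.
case: z => h k [/= dh dk]; rewrite MST_expand /= (symPr dh dk) subrr mulr0 addr0.
have := Pr_ge0 HipH (T k); have := Pr_ge0 HipK (S h); lra.
Qed.

Lemma orth_zero r : r != 0 -> forall y : H * Kk,
  (forall z, dom z -> PP y (MST_sub S T (emb r) z) = 0) -> y = 0.
Proof.
move=> r0 [y1 y2] hy.
have ct : cj (emb r) = emb r by rewrite cj_emb.
have hG : forall z, dom z ->
    ipH y1 (MST_sub S T (emb r) z).1 + ipK y2 (MST_sub S T (emb r) z).2 = 0.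
  move=> [h k] [/= dh dk]; apply: polar => a.
  have dz' : dom (cj a *: h, cj a *: k) by split; [exact: (domZ linS) | exact: (domZ linT)].
  have := hy _ dz'; rewrite (MST_Z _ _ (conj dh dk)) /PP /=.
  by rewrite /Pr (ipZr HipH) (ipZr HipK) !cjK -reD -mulrDr.
have e1 : forall h, DS h -> ipK (S h) y2 = ipH h (emb r *: y1).
  move=> h dh; have := hG (h, 0) (conj dh (dom0 linT)).
  rewrite /MST_sub /= (lin0 linT) scaler0 subr0 oppr0 sub0r.
  rewrite (ipNr HipH) (ipZr HipH) ct => /eqP; rewrite addrC subr_eq0 => /eqP eq.
  by rewrite (ipC HipK) eq (ipZr HipH) ct cjM cj_emb -(ipC HipH).
have dy2 : DT y2 by apply/(adjS.1 y2); exists (emb r *: y1).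
have Ty2 : T y2 = emb r *: y1.
  apply/eqP; rewrite -subr_eq0; apply/eqP; apply: (dense_orth HipH dS) => h dh.
  by rewrite (ipBr HipH) -sym // e1 // subrr.
have e2 : forall k, DT k -> ipH (T k) y1 = ipK k (emb (- r) *: y2).
  move=> k dk; have := hG (0, k) (conj (dom0 linS) dk).
  rewrite /MST_sub /= (lin0 linS) scaler0 subr0 sub0r.
  rewrite (ipNr HipH) (ipNr HipK) (ipZr HipK) ct => /eqP.
  rewrite -opprD oppr_eq0 addr_eq0 => /eqP eq.
  by rewrite (ipC HipH) eq cjN cjM cj_emb -(ipC HipK) (ipZr HipK) cj_emb embN mulNr.
have dy1 : DS y1 by apply/(adjT.1 y1); exists (emb (- r) *: y2).
have Sy1 : S y1 = emb (- r) *: y2.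
  apply/eqP; rewrite -subr_eq0; apply/eqP; apply: (dense_orth HipK dT) => k dk.
  by rewrite (ipBr HipK) -(adjT.2 _ dy1 _ dk) e2 // subrr.
have e := sym dy1 dy2; rewrite Sy1 Ty2 in e.
have : Pr ipK (emb (- r) *: y2) y2 = Pr ipH y1 (emb r *: y1) by rewrite /Pr e.
rewrite (PrZl HipK) (PrZr HipH) => e'.
apply: pr_eq0; rewrite /pr /=.
have : r * (Pr ipH y1 y1 + Pr ipK y2 y2) = 0 by rewrite mulrDr -e'; ring.
by move/eqP; rewrite mulf_eq0 (negbTE r0) /= => /eqP.
Qed.

Lemma comp_cauchy1 (w : nat -> H * Kk) :
  (forall e : R, 0 < e -> exists N, forall m n, (N <= m)%N -> (N <= n)%N ->
      PP (w m - w n) (w m - w n) < e) ->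
  (forall e : R, 0 < e -> exists N, forall m n, (N <= m)%N -> (N <= n)%N ->
      Pr ipH ((w m).1 - (w n).1) ((w m).1 - (w n).1) < e).
Proof.
move=> cw e e0; have [N HN] := cw e e0; exists N => m n Nm Nn.
have := HN m n Nm Nn; rewrite /PP /=.
by have := Pr_ge0 HipK ((w m).2 - (w n).2); lra.
Qed.
Lemma comp_cauchy2 (w : nat -> H * Kk) :
  (forall e : R, 0 < e -> exists N, forall m n, (N <= m)%N -> (N <= n)%N ->
      PP (w m - w n) (w m - w n) < e) ->
  (forall e : R, 0 < e -> exists N, forall m n, (N <= m)%N -> (N <= n)%N ->
      Pr ipK ((w m).2 - (w n).2) ((w m).2 - (w n).2) < e).
Proof.
move=> cw e e0; have [N HN] := cw e e0; exists N => m n Nm Nn.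
have := HN m n Nm Nn; rewrite /PP /=.
by have := Pr_ge0 HipH ((w m).1 - (w n).1); lra.
Qed.

Lemma surj r : r != 0 -> forall x : H * Kk, exists z, dom z /\ MST_sub S T (emb r) z = x.
Proof.
move=> r0 x.
pose Rg := [set w | exists z, dom z /\ MST_sub S T (emb r) z = w].
have V0 : Rg 0 by exists 0; split; [exact: dom0' | exact: MST0].
have VD : forall a b, Rg a -> Rg b -> Rg (a + b).
  move=> a b [za [dza <-]] [zb [dzb <-]]; exists (za + zb).
  by split; [exact: domD' | exact: MST_D].
have VZ : forall c a, Rg a -> Rg (scP c a).
  move=> c a [[h k] [dz <-]]; exists (emb c *: h, emb c *: k); split.
    by case: dz => dh dk; split; [exact: (domZ linS) | exact: (domZ linT)].
  by rewrite MST_Z.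
have r2 : 0 < r ^+ 2 by rewrite lt_neqAle sqr_ge0 andbT eq_sym sqrf_eq0.
have Vc : forall u, (forall n, Rg (u n)) ->
     (forall e : R, 0 < e -> exists N, forall m n, (N <= m)%N -> (N <= n)%N ->
         PP (u m - u n) (u m - u n) < e) ->
     exists v, Rg v /\ conv PP u v.
  move=> u Ru cu.
  have : forall n, exists z, dom z /\ MST_sub S T (emb r) z = u n by move=> n; exact: Ru n.
  move=> /choice [zs Hzs].
  have cz : forall e : R, 0 < e -> exists N, forall m n, (N <= m)%N -> (N <= n)%N ->
         PP (zs m - zs n) (zs m - zs n) < e.
    move=> e e0; have [N HN] := cu (r ^+ 2 * e) (mulr_gt0 r2 e0).
    exists N => m n Nm Nn.
    have h1 := LB r (domB' (Hzs m).1 (Hzs n).1).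
    rewrite (MST_B _ (Hzs m).1 (Hzs n).1) (Hzs m).2 (Hzs n).2 in h1.
    have h2 := HN m n Nm Nn.
    rewrite -(ltr_pM2l r2).
    exact: le_lt_trans h1 h2.
  have cz1 := comp_cauchy1 cz; have cz2 := comp_cauchy2 cz.
  have cu1 := comp_cauchy1 cu; have cu2 := comp_cauchy2 cu.
  have [h ch] := seq_completeq HipH cz1.
  have [k ck] := seq_completeq HipK cz2.
  have [f cf] := seq_completeq HipH cu1.
  have [g cg] := seq_completeq HipK cu2.
  have cS : conv (Pr ipK) (fun n => S (zs n).1) (emb 1 *: g + emb r *: k).
    apply: (@conv_ext _ _ _ (fun n => emb 1 *: (u n).2 + emb r *: (zs n).2)); last first.
      exact: conv_lin.
    by move=> n; rewrite emb1 scale1r -(Hzs n).2 /MST_sub /= subrK.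
  have [dh Sh] := adj_closed HipK HipH dT adjT (fun n => (Hzs n).1.1) ch cS.
  have cT : conv (Pr ipH) (fun n => T (zs n).2) (emb (- 1) *: f + emb (- r) *: h).
    apply: (@conv_ext _ _ _ (fun n => emb (- 1) *: (u n).1 + emb (- r) *: (zs n).1)); last first.
      exact: conv_lin.
    move=> n; rewrite (embN 1) emb1 scaleN1r (embN r) scaleNr -(Hzs n).2 /MST_sub /=.
    by rewrite !opprD !opprK addrK.
  have [dk Tk] := adj_closed HipH HipK dS adjS (fun n => (Hzs n).1.2) ck cT.
  exists (f, g); split.
    exists (h, k); split; first by split.
    rewrite /MST_sub /= Tk Sh emb1 scale1r addrK (embN 1) emb1 scaleN1r (embN r) scaleNr.
    by rewrite !opprD !opprK addrK.
  move=> e e0.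
  have e2 : 0 < e / 2 by lra.
  have [N1 H1] := cf _ e2; have [N2 H2] := cg _ e2.
  exists (maxn N1 N2) => n Nn.
  have g1 := H1 n (leq_trans (leq_maxl _ _) Nn).
  have g2 := H2 n (leq_trans (leq_maxr _ _) Nn).
  rewrite /PP /=; lra.
have [v [Rv ov]] := projection PPD PPZ PPC PP_ge0 V0 VD VZ Vc x.
have : x - v = 0.
  by apply: (orth_zero r0) => z dz; apply: ov; exists z.
by move/eqP; rewrite subr_eq0 => /eqP ->.
Qed.

Lemma inj_MST r : r != 0 -> forall z1 z2, dom z1 -> dom z2 ->
  MST_sub S T (emb r) z1 = MST_sub S T (emb r) z2 -> z1 = z2.
Proof.
move=> r0 z1 z2 d1 d2 e.
have r2 : 0 < r ^+ 2 by rewrite lt_neqAle sqr_ge0 andbT eq_sym sqrf_eq0.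
have h := LB r (domB' d1 d2).
rewrite (MST_B _ d1 d2) e subrr /pr /= (Pr0l HipH) (Pr0l HipK) addr0 in h.
have h0 : pr (z1 - z2) = 0.
  apply/eqP; rewrite eq_le pr_ge0 andbT.
  by rewrite -(pmulr_rle0 _ r2).
by apply/eqP; rewrite -subr_eq0; apply/eqP; apply: pr_eq0.
Qed.

Lemma dir1 (t : K) : t \is Num.real -> t != 0 ->
  in_resolvent DS S DT T t /\ forall Rinv, is_inverse_MST DS S DT T t Rinv -> opnorm_le Rinv (`|t|^-1).
Proof.
move=> treal t0; have [r rt] := real_emb treal; subst t.
have r0 : r != 0 by apply: contra t0 => /eqP ->; rewrite emb0.
have r2 : 0 < r ^+ 2 by rewrite lt_neqAle sqr_ge0 andbT eq_sym sqrf_eq0.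
have bound : forall Rinv, is_inverse_MST DS S DT T (emb r) Rinv ->
    opnorm_le Rinv (`|emb r|^-1).
  move=> Rinv [H1 H2] w; have [d1 [d2 e]] := H1 w.
  have h := LB r (conj d1 d2); rewrite e in h.
  rewrite !pnorm2E exprVn real_normK // -embX -embV ?expf_neq0 // -embM emb_le.
  have -> : pr (Rinv w) = (r ^+ 2)^-1 * (r ^+ 2 * pr (Rinv w)).
    by rewrite mulrA mulVf ?mul1r // expf_neq0.
  by apply: ler_wpM2l => //; rewrite invr_ge0 ltW.
split => //.
have : forall x, exists z, dom z /\ MST_sub S T (emb r) z = x by exact: surj.
move=> /choice [Rinv HR].
have inv : is_inverse_MST DS S DT T (emb r) Rinv.
  split; first by move=> z; have [[d1 d2] e] := HR z.
  move=> w d1 d2; have [dR e] := HR (MST_sub S T (emb r) w).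
  by apply: (inj_MST r0) => //; split.
exists Rinv; split => //; exists (`|emb r|^-1); split; last exact: bound.
by rewrite invr_ge0 normr_ge0.
Qed.

End Dir1.

Section Dir2.
Hypothesis Hres : forall t : K, t \is Num.real -> t != 0 ->
  in_resolvent DS S DT T t /\
  forall Rinv, is_inverse_MST DS S DT T t Rinv -> opnorm_le Rinv (`|t|^-1).

Lemma getR r : r != 0 -> exists Rinv, is_inverse_MST DS S DT T (emb r) Rinv.
Proof.
move=> r0; have [[Rinv [Hinv _]] _] := Hres (emb_real r) (emb_neq0 r0).
by exists Rinv.
Qed.

Lemma r1 r z : r != 0 -> dom z -> r ^+ 2 * pr z <= pr (MST_sub S T (emb r) z).
Proof.
move=> r0 [d1 d2].
have r2 : 0 < r ^+ 2 by rewrite lt_neqAle sqr_ge0 andbT eq_sym sqrf_eq0.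
have [[Rinv [Hinv _]] Hb] := Hres (emb_real r) (emb_neq0 r0).
have e := Hinv.2 z d1 d2.
have := Hb Rinv Hinv (MST_sub S T (emb r) z); rewrite e.
rewrite !pnorm2E exprVn real_normK ?emb_real // -embX -embV ?expf_neq0 // -embM emb_le.
move=> h.
have -> : pr (MST_sub S T (emb r) z) =
   r ^+ 2 * ((r ^+ 2)^-1 * pr (MST_sub S T (emb r) z)).
  by rewrite mulrA mulfV ?mul1r // expf_neq0.
by apply: ler_wpM2l => //; exact: ltW.
Qed.

Lemma r2 h k : DS h -> DT k -> Pr ipH (T k) h = Pr ipK (S h) k.
Proof.
move=> dh dk.
set b := Pr ipH (T k) (T k) + Pr ipK (S h) (S h).
set c := 2 * Pr ipH (T k) h - 2 * Pr ipK (S h) k.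
have b0 : 0 <= b by rewrite /b addr_ge0 // Pr_ge0.
have key : forall r, r != 0 -> 0 <= b + r * c.
  move=> r r0; have := r1 r0 (conj dh dk: dom (h, k)).
  rewrite MST_expand /= -/b -/c => hh.
  have := hh; move: (r ^+ 2 * pr (h, k)) => X; lra.
have c0 : c = 0.
  apply/eqP; apply/negP => /negP c0.
  have rr : - (b + 1) / c != 0 by rewrite mulf_neq0 ?invr_eq0 // oppr_eq0; apply/eqP => hh; lra.
  have := key _ rr.
  have -> : - (b + 1) / c * c = - (b + 1) by rewrite mulrVK // unitfE.
  lra.
move: c0; rewrite /c => /eqP; rewrite subr_eq0 => /eqP hh.
by apply: (mulfI (_ : (2 : R) != 0)).
Qed.

Lemma sym' h k : DS h -> DT k -> ipK (S h) k = ipH h (T k).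
Proof.
move=> dh dk; apply/eqP; rewrite -subr_eq0; apply/eqP; apply: polar => a.
rewrite mulrBr reB -(ipZl HipK) -(ipZl HipH) -(linZ linS) //.
rewrite -/(Pr ipK _ _) -/(Pr ipH _ _) (PrC HipH) -r2 ?subrr //.
exact: (domZ linS).
Qed.

Lemma orthDS w : (forall h, DS h -> ipH h w = 0) -> w = 0.
Proof.
move=> hw; have [Rinv [H1 _]] := getR (oner_neq0 R).
have [d1 [d2 e]] := H1 (w, 0).
move: e d1 d2; case: (Rinv (w, 0)) => h k /=.
rewrite /MST_sub /= emb1 !scale1r => -[e1 e2] dh dk.
have p1 : Pr ipH w h = 0 by rewrite (PrC HipH) /Pr hw // re0.
rewrite -e1 (PrBl HipH) (PrNl HipH) in p1.
have sk : S h = k by apply/eqP; rewrite -subr_eq0 e2.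
have := r2 dh dk; rewrite sk => p2.
have ph := Pr_ge0 HipH h; have pk := Pr_ge0 HipK k.
have hh : Pr ipH h h = 0 by lra.
have kk : Pr ipK k k = 0 by lra.
by rewrite -e1 (Pr_eq0 HipH hh) (Pr_eq0 HipK kk) (lin0 linT) oppr0 addr0.
Qed.

Lemma orthDT w : (forall k, DT k -> ipK k w = 0) -> w = 0.
Proof.
move=> hw; have [Rinv [H1 _]] := getR (oner_neq0 R).
have [d1 [d2 e]] := H1 (0, w).
move: e d1 d2; case: (Rinv (0, w)) => h k /=.
rewrite /MST_sub /= emb1 !scale1r => -[e1 e2] dh dk.
have p1 : Pr ipK w k = 0 by rewrite (PrC HipK) /Pr hw // re0.
rewrite -e2 (PrBl HipK) in p1.
have th : T k = - h by apply/eqP; rewrite -subr_eq0 opprK -oppr_eq0 opprD e1.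
have := r2 dh dk; rewrite th (PrNl HipH) => p2.
have ph := Pr_ge0 HipH h; have pk := Pr_ge0 HipK k.
have hh : Pr ipH h h = 0 by lra.
have kk : Pr ipK k k = 0 by lra.
rewrite -e2 (Pr_eq0 HipH hh) (Pr_eq0 HipK kk) (lin0 linS) subr0 //.
Qed.

Lemma dom_adj w1 w2 v1 v2 :
  (forall h k, DS h -> DT k -> ipH (- T k) w1 + ipK (S h) w2 = ipH h v1 + ipK k v2) ->
  DS w1 /\ DT w2.
Proof.
move=> hyp.
have m10 : (- 1 : R) != 0 by rewrite oppr_eq0 oner_neq0.
have [Rm [Hm _]] := getR m10.
have [Rp [Hp _]] := getR (oner_neq0 R).
have [d01 [d02 E0]] := Hm ((w1, w2) - (v1, v2)).
move: d01 d02 E0; case: (Rm ((w1, w2) - (v1, v2))) => h0 k0 /= dh0 dk0.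
rewrite /MST_sub /= (embN 1) emb1 !scaleN1r !opprK => -[E01 E02].
have [d1 [d2 E1]] := Hp ((w1, w2) - (h0, k0)).
move: d1 d2 E1; case: (Rp ((w1, w2) - (h0, k0))) => h k /= dh dk.
rewrite /MST_sub /= emb1 !scale1r => -[E11 E12].
have hw : ipK (S h) w2 = ipH h v1 + ipK k v2 + ipH (T k) w1.
  have e := hyp h k dh dk; rewrite (ipNl HipH) in e.
  by apply/eqP; rewrite -subr_eq0 -e; apply/eqP; ring.
have s1 : ipH (T k) h0 = ipK k (S h0).
  by rewrite (ipC HipH) -sym' // -(ipC HipK).
have s2 : ipK (S h) k0 = ipH h (T k0) by rewrite sym'.
have X1z : (v1 - w1) + (- T k0 + h0) = 0 by rewrite E01 addrC addrA subrK subrr.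
have X2z : (v2 - w2) + (S h0 + k0) = 0 by rewrite E02 addrC addrA subrK subrr.
have key : ipH (w1 - h0) (w1 - h0) + ipK (w2 - k0) (w2 - k0) =
    ipH h ((v1 - w1) + (- T k0 + h0)) + ipK k ((v2 - w2) + (S h0 + k0)).
  rewrite -{1}E11 -{1}E12.
  rewrite !(ipBl HipH, ipBr HipH, ipDl HipH, ipDr HipH, ipNl HipH, ipNr HipH).
  rewrite !(ipBl HipK, ipBr HipK, ipDl HipK, ipDr HipK, ipNl HipK, ipNr HipK).
  rewrite s1 s2 hw; ring.
rewrite X1z X2z (ip0r HipH) (ip0r HipK) addr0 in key.
have : pr ((w1 - h0), (w2 - k0)) = 0.
  by rewrite /pr /= /Pr -reD key re0.
move/pr_eq0 => [] /eqP; rewrite subr_eq0 => /eqP -> /eqP; rewrite subr_eq0 => /eqP ->.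
by [].
Qed.

Lemma adjS_of : is_adjoint ipH ipK DS S DT T.
Proof.
split; last by move=> k dk h dh; exact: sym'.
move=> k; split; first by move=> dk; exists (T k) => h dh; exact: sym'.
move=> [z hz]; have [] := @dom_adj 0 k z 0 => // h k' dh dk'.
by rewrite (ip0r HipH) add0r (ip0r HipK) addr0 hz.
Qed.

Lemma adjT_of : is_adjoint ipK ipH DT T DS S.
Proof.
have fw : forall h, DS h -> forall k, DT k -> ipH (T k) h = ipK k (S h).
  by move=> h dh k dk; rewrite (ipC HipH) -sym' // -(ipC HipK).
split => // h; split; first by move=> dh; exists (S h); exact: fw.
move=> [z hz]; have [] := @dom_adj h 0 0 (- z) => // h' k dh dk.
by rewrite (ipNl HipH) (hz k dk) (ip0r HipK) addr0 (ip0r HipH) add0r (ipNr HipK).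
Qed.

End Dir2.

Theorem gen_thm : thm_statement cj ipH ipK DS S DT T.
Proof.
split.
  move=> [dS [dT [adjS adjT]]] t treal t0; exact: dir1.
move=> Hres; split.
  apply: (dense_of_orth HipH) => //; first by case: linS.
  exact: orthDS.
split.
  apply: (dense_of_orth HipK) => //; first by case: linT.
  exact: orthDT.
split; [exact: adjS_of | exact: adjT_of].
Qed.

End Main.

End Gen.

Local Open Scope complex_scope.



Lemma polarC (R : realType) (f : R[i]) : (forall a : R[i], complex.Re (a * f) = 0) -> f = 0.
Proof.
case: f => f1 f2 h.
have h1 := h 1; have h2 := h (Complex 0 (-1)).
rewrite /= in h1 h2.
have e1 : f1 = 0 by move: h1; rewrite mul1r mul0r subr0.
have e2 : f2 = 0 by move: h2; rewrite mul0r sub0r mulN1r opprK.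
by rewrite e1 e2.
Qed.

Theorem theorem4p1 (R : realType) :
  (* real Hilbert spaces *)
  (forall (H Kk : completeNormedModType R)
     (ipH : H -> H -> R) (ipK : Kk -> Kk -> R)
     (DS : set H) (S : H -> Kk) (DT : set Kk) (T : Kk -> H),
     is_inner_product id ipH -> is_inner_product id ipK ->
     linear_op DS S -> linear_op DT T ->
     thm_statement id ipH ipK DS S DT T)
  /\
  (* complex Hilbert spaces *)
  (forall (H Kk : completeNormedModType R[i])
     (ipH : H -> H -> R[i]) (ipK : Kk -> Kk -> R[i])
     (DS : set H) (S : H -> Kk) (DT : set Kk) (T : Kk -> H),
     is_inner_product (@conjc R) ipH -> is_inner_product (@conjc R) ipK ->
     linear_op DS S -> linear_op DT T ->
     thm_statement (@conjc R) ipH ipK DS S DT T).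
Proof.
split.
- move=> H Kk ipH ipK DS S DT T HH HK LS LT.
  apply: (@gen_thm R R id id id) => //.
  + by move=> f /(_ 1); rewrite mul1r.
- move=> H Kk ipH ipK DS S DT T HH HK LS LT.
  apply: (@gen_thm R R[i] (@conjc R) (fun r => r%:C) (@complex.Re R)) => //.
  + by move=> a b; rewrite rmorphD.
  + by move=> a b; rewrite rmorphM.
  + by move=> a; rewrite rmorphN.
  + by move=> a b; rewrite lecR.
  + by move=> a b; rewrite ltcR.
  + by move=> x; exact: RRe_real.
  + by move=> [x1 x2] [y1 y2].
  + by move=> a [x1 x2] /=; rewrite mul0r subr0.
  + by move=> x y; rewrite rmorphD.
  + by move=> x y; rewrite rmorphM.
  + exact: conjcK.
  + exact: conjc_real.
  + by move=> [x1 x2].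
  + exact: polarC.
Qed.
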